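(* Assume $\mathcal S\subseteq\mathcal D$. Let $F\in\mathbb R^{d\times s}$, $H=BFC$, $\bar F=F\bar C$, $\bar H=\bar B\bar F$, and consider the closed-loop systems $e[k+1]=(I_{2n}-H)e[k]$ (closed loop of $\Sigma^1$ under $u=-Fy$) and $\bar e[k+1]=(I_s-\bar H)\bar e[k]$ (closed loop of $\Sigma^2$ under $u=-\bar F\bar e$). Suppose every eigenvalue $\lambda$ of $\bar H$ satisfies $|\lambda-1|<1$. Then: (i) every trajectory of $\bar e[k+1]=(I_s-\bar H)\bar e[k]$ converges to $0$ exponentially; (ii) the system $e[k+1]=(I_{2n}-H)e[k]$ is stable in the sense of Lyapunov (all trajectories remain bounded; equivalently all eigenvalues of $I_{2n}-H$ have modulus at most $1$ and those of modulus $1$ are semisimple); (iii) for every trajectory of $e[k+1]=(I_{2n}-H)e[k]$ and every $p\in\mathcal S$, the component $e_p[k]$ converges to $0$ exponentially.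
   Context: Standing setup. Let $n\ge 1$ and consider a radial distribution network modeled as a tree with root node $0$ (the substation), non-root nodes $\mathcal N=\{1,\dots,n\}$, and edge set $\mathcal L$; each edge $(i,j)\in\mathcal L$ has resistance $r_{ij}\in\mathbb R$ and reactance $x_{ij}\in\mathbb R$. For a node $i$, $\mathcal L_i$ denotes the set of edges on the unique path from node $0$ to node $i$. Define $R^0,X^0\in\mathbb R^{n\times n}$ by $R^0_{ij}=2\sum_{(w,t)\in\mathcal L_i\cap\mathcal L_j} r_{wt}$ and $X^0_{ij}=2\sum_{(w,t)\in\mathcal L_i\cap\mathcal L_j} x_{wt}$. Let $\mathcal D_1\subseteq\mathcal N$ (nodes with a DER) and $\mathcal S_1\subseteq\mathcal N$ (nodes with a sensor) be nonempty, listed in increasing order; let $\mathcal D_2=\{i+n: i\in\mathcal D_1\}$, $\mathcal S_2=\{i+n:i\in\mathcal S_1\}$, $\mathcal D=\mathcal D_1\cup\mathcal D_2$, $\mathcal S=\mathcal S_1\cup\mathcal S_2$ (subsets of $\{1,\dots,2n\}$, listed in increasing order), $d=|\mathcal D|$, $s=|\mathcal S|$, $\overline{\mathcal D}=\{1,\dots,2n\}\setminus\mathcal D$, $\overline{\mathcal S}=\{1,\dots,2n\}\setminus\mathcal S$. For an increasingly ordered set $\Omega=\{i_1,\dots,i_g\}\subseteq\{1,\dots,c\}$, let $\Gamma_c(\Omega)=[\mathfrak e_{i_1}\ \cdots\ \mathfrak e_{i_g}]\in\mathbb R^{c\times g}$, where $\mathfrak e_\omega$ is the $\omega$-th standard basis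 vector of $\mathbb R^c$. Set $T^d=\Gamma_n(\mathcal D_1)$, $R=R^0T^d$, $X=X^0T^d\in\mathbb R^{n\times d/2}$, $T^s=\Gamma_{2n}(\mathcal S)^\top\in\mathbb R^{s\times 2n}$, and $A=I_{2n}$, $B=\begin{bmatrix}X & R\\ -\tfrac12 R & \tfrac12 X\end{bmatrix}\in\mathbb R^{2n\times d}$, $C=T^s$. The system $\Sigma^1$ is $e[k+1]=Ae[k]+Bu[k]$, $y[k]=Ce[k]$ with state $e[k]\in\mathbb R^{2n}$, input $u[k]\in\mathbb R^d$, output $y[k]\in\mathbb R^s$. Define the permutation matrix $T=[\Gamma_{2n}(\mathcal S\cap\mathcal D),\ \Gamma_{2n}(\mathcal S\cap\overline{\mathcal D}),\ \Gamma_{2n}(\overline{\mathcal S}\cap\mathcal D),\ \Gamma_{2n}(\overline{\mathcal S}\cap\overline{\mathcal D})]\in\mathbb R^{2n\times 2n}$ (each intersection listed in increasing order) and $G=\Gamma_{2n}(\{1,\dots,s\})\in\mathbb R^{2n\times s}$. The reduced system $\Sigma^2$ has $\bar A=I_s$, $\bar B=G^\top T^{-1}B\in\mathbb R^{s\times d}$, $\bar C=CTG\in\mathbb R^{s\times s}$, and reduced state $\bar e=G^\top T^{-1}e\in\mathbb R^s$. *)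

(* Defs.v *)
From HB Require Import structures.
From mathcomp Require Import all_boot all_order all_algebra.
From mathcomp Require Export complex.
Set Implicit Arguments. Unset Strict Implicit. Unset Printing Implicit Defensive.
Import Order.TTheory GRing.Theory Num.Theory.
Local Open Scope ring_scope.

(* Non-root node k (paper: node k+1) is an element of 'I_n; the root (node 0,
   the substation) is None.  par k is the parent of node k; the edge set is
   { (par k, k) }, and the edge entering k carries resistance r k and
   reactance x k. *)
Definition step n (par : 'I_n -> option 'I_n) : option 'I_n -> option 'I_n :=
  fun o => obind par o.

Definition is_tree n (par : 'I_n -> option 'I_n) : Prop :=
  forall i : 'I_n, iter n (step par) (Some i) = None.

(* L_i, identified with the set of child endpoints of the edges on the path
   from the root to i (i.e. i and all its non-root ancestors). *)
Definition path_edges n (par : 'I_n -> option 'I_n) (i : 'I_n) : {set 'I_n} :=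
  [set k | [exists m : 'I_n.+1, iter m (step par) (Some i) == Some k]].

Definition R0mx (R : pzRingType) n (par : 'I_n -> option 'I_n) (r : 'I_n -> R)
  : 'M[R]_n :=
  \matrix_(i, j) (2%:R * \sum_(k in path_edges par i :&: path_edges par j) r k).

(* Gamma_c(Omega): columns are the standard basis vectors e_w, w in Omega,
   in increasing order (enum of a set of ordinals is increasing). *)
Definition Gamma (R : pzRingType) c (Om : {set 'I_c}) : 'M[R]_(c, #|Om|) :=
  \matrix_(i, j) ((i == enum_val j)%:R).

(* D = D1 ∪ (D1 + n) inside {1..2n} = 'I_(n+n) *)
Definition dbl n (A : {set 'I_n}) : {set 'I_(n + n)} :=
  [set lshift n i | i in A] :|: [set rshift n i | i in A].

Section System.
Variables (R : fieldType) (n : nat) (par : 'I_n -> option 'I_n)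
          (r x : 'I_n -> R) (D1 S1 : {set 'I_n}).

Definition Dset := dbl D1.
Definition Sset := dbl S1.
Definition Rmx : 'M[R]_(n, #|D1|) := R0mx par r *m Gamma R D1.
Definition Xmx : 'M[R]_(n, #|D1|) := R0mx par x *m Gamma R D1.

(* B = [X R; -1/2 R, 1/2 X]; the input dimension d = 2|D1| is written
   #|D1| + #|D1|. *)
Definition Bmx : 'M[R]_(n + n, #|D1| + #|D1|) :=
  block_mx Xmx Rmx (- (2%:R^-1 *: Rmx)) (2%:R^-1 *: Xmx).

Definition Cmx : 'M[R]_(#|Sset|, n + n) := (Gamma R Sset)^T.

(* The permutation matrix T = [Gamma(S∩D) Gamma(S∩~D) Gamma(~S∩D) Gamma(~S∩~D)]:
   column j is e_{t_j} where t is the concatenated increasing enumeration. *)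
Definition Tseq : seq 'I_(n + n) :=
  enum (Sset :&: Dset) ++ enum (Sset :&: ~: Dset)
  ++ enum (~: Sset :&: Dset) ++ enum (~: Sset :&: ~: Dset).
Definition Tmx : 'M[R]_(n + n) :=
  \matrix_(i, j) ((val i == nth 0%N (map val Tseq) j)%:R).

(* G = Gamma_{2n}({1..s}) *)
Definition Gmx : 'M[R]_(n + n, #|Sset|) := \matrix_(i, j) ((val i == val j)%:R).

Definition Bbar : 'M[R]_(#|Sset|, #|D1| + #|D1|) := Gmx^T *m invmx Tmx *m Bmx.
Definition Cbar : 'M[R]_(#|Sset|) := Cmx *m Tmx *m Gmx.

End System.

Definition trajectory (R : pzRingType) m (M : 'M[R]_m) (z : nat -> 'cV[R]_m) :=
  forall k, z k.+1 = M *m z k.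

Definition exp_conv (R : realFieldType) (u : nat -> R) : Prop :=
  exists c rho : R, 0 <= rho < 1 /\ forall k, `|u k| <= c * rho ^+ k.

Definition exp_conv_vec (R : realFieldType) m (z : nat -> 'cV[R]_m) : Prop :=
  forall i, exp_conv (fun k => z k i 0).

(* Lyapunov stability of z[k+1] = M z[k] (max-norm on components):
   epsilon-delta stability of the origin, together with boundedness of
   every trajectory. *)
Definition lyapunov_stable (R : realFieldType) m (M : 'M[R]_m) : Prop :=
  (forall eps : R, 0 < eps -> exists2 delta : R, 0 < delta &
     forall z, trajectory M z -> (forall i, `|z 0%N i 0| < delta) ->
       forall k i, `|z k i 0| < eps)
  /\ (forall z, trajectory M z -> exists Mb : R, forall k i, `|z k i 0| <= Mb).

(* Main.v *)
Require Import Defs.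
From HB Require Import structures.
From mathcomp Require Import all_boot all_order all_algebra.
From mathcomp Require Import complex.
From mathcomp Require Import ring lra.
Import Order.TTheory GRing.Theory Num.Theory.
Local Open Scope ring_scope.

Section Spec.
Variable R : rcfType.
Local Notation C := (R[i]).

Definition nr (z : C) : R := complex.Re `|z|.

Lemma normE (z : C) : `|z| = (nr z)%:C%C.
Proof. by rewrite /nr normc_def. Qed.

Lemma nr_ge0 z : 0 <= nr z.
Proof. by rewrite -ler0c -normE. Qed.

Lemma nrM x y : nr (x * y) = nr x * nr y.
Proof. by apply: complexI; rewrite rmorphM /= -!normE normrM. Qed.

Lemma nrD x y : nr (x + y) <= nr x + nr y.
Proof. by rewrite -lecR rmorphD /= -!normE ler_normD. Qed.

Lemma nrN x : nr (- x) = nr x.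
Proof. by rewrite /nr normrN. Qed.

Lemma nr0 : nr 0 = 0.
Proof. by apply: complexI; rewrite -normE normr0. Qed.

Lemma nrR (a : R) : nr (a%:C)%C = `|a|.
Proof. by rewrite /nr normc_def /= expr0n /= addr0 sqrtr_sqr. Qed.

Lemma step_real (a b : nat -> R) (mu rho c : R) : 0 <= mu -> mu < rho ->
  (forall k, 0 <= a k) -> (forall k, 0 <= b k) ->
  (forall k, a k.+1 <= mu * a k + b k) -> (forall k, b k <= c * rho ^+ k) ->
  forall k, a k <= (a 0%N + c / (rho - mu)) * rho ^+ k.
Proof.
move=> mu0 murho a0 b0 ak bk.
have c0 : 0 <= c by have := bk 0%N; rewrite expr0 mulr1; apply: le_trans.
have rm : 0 < rho - mu by rewrite subr_gt0.
have e : c / (rho - mu) * (rho - mu) = c by rewrite mulfVK // gt_eqF.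
have q0 : 0 <= c / (rho - mu) by rewrite divr_ge0 // ltW.
set q := c / (rho - mu) in e q0 *.
have hc : mu * (a 0%N + q) + c <= (a 0%N + q) * rho.
  have := mulr_ge0 (a0 0%N) (ltW rm); nra.
elim=> [|k IH]; first by rewrite expr0 mulr1 lerDl.
have rk : 0 <= rho ^+ k by rewrite exprn_ge0 // ltW // (le_lt_trans mu0).
rewrite exprS; set r := rho ^+ k in rk IH *.
have h1 : mu * a k <= mu * ((a 0%N + q) * r) by rewrite ler_wpM2l.
have h2 : (mu * (a 0%N + q) + c) * r <= (a 0%N + q) * rho * r by rewrite ler_wpM2r.
have h3 : b k <= c * r by exact: bk.
have := ak k; nra.
Qed.

Lemma step_cplx (u v : nat -> C) (z : C) (rho c A : R) : nr z < rho ->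
  nr (u 0%N) <= A ->
  (forall k, u k.+1 = z * u k + v k) -> (forall k, nr (v k) <= c * rho ^+ k) ->
  forall k, nr (u k) <= (A + c / (rho - nr z)) * rho ^+ k.
Proof.
move=> zr uA uk vk k.
have := @step_real (fun k => nr (u k)) (fun k => nr (v k)) (nr z) rho c
  (nr_ge0 z) zr (fun k => nr_ge0 _) (fun k => nr_ge0 _).
move=> /(_ _ vk k) /le_trans; apply.
- move=> j; rewrite uk -nrM; exact: nrD.
- apply: ler_wpM2r; first by rewrite exprn_ge0 // ltW // (le_lt_trans (nr_ge0 z)).
  by rewrite lerD2r.
Qed.


Lemma le_sum_ord m (F : 'I_m -> R) i : (forall j, 0 <= F j) -> F i <= \sum_j F j.
Proof. by move=> F0; rewrite (bigD1 i) //= lerDl sumr_ge0. Qed.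

Lemma decay_list m (M : 'M[C]_m.+1) (s : seq C) :
  (forall z, z \in s -> nr z < 1) ->
  forall P : 'M[C]_m.+1, P * \prod_(z <- s) (M - z%:M) = 0 ->
  exists rho c : R, [/\ 0 < rho, rho < 1 &
    forall k i j, nr ((P * M ^+ k) i j) <= c * rho ^+ k].
Proof.
elim: s => [|z s IH] hs P.
  rewrite big_nil mulr1 => ->; exists (1/2), 0; split; try lra.
  by move=> k i j; rewrite mul0r mxE nr0 mul0r.
rewrite big_cons mulrA => hP.
have [|rho1 [c1 [r10 r11 hb]]] := IH _ _ hP.
  by move=> w hw; apply: hs; rewrite in_cons hw orbT.
have hz : nr z < 1 by apply: hs; rewrite mem_head.
have c10 : 0 <= c1.
  have := hb 0%N ord0 ord0; rewrite !expr0 !mulr1 => h.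
  exact: le_trans (nr_ge0 _) h.
have z0 := nr_ge0 z.
set rho := Num.max rho1 ((1 + nr z)/2).
have hr1 : rho1 <= rho by rewrite le_max lexx.
have hr2 : (1 + nr z)/2 <= rho by rewrite le_max lexx orbT.
have hr3 : rho < 1 by rewrite gt_max r11 /=; lra.
have hr4 : nr z < rho by lra.
pose A := \sum_i \sum_j nr (P i j).
exists rho, (A + c1 / (rho - nr z)); split; [lra|lra|].
move=> k i j.
apply: (@step_cplx (fun k => (P * M ^+ k) i j) (fun k => (P * (M - z%:M) * M ^+ k) i j)).
- exact: hr4.
- rewrite /= expr0 mulr1; apply: (@le_trans _ _ (\sum_j nr (P i j))).
    by apply: le_sum_ord => j'; exact: nr_ge0.
  rewrite /A; apply: (@le_sum_ord _ (fun i0 => \sum_j nr (P i0 j))).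
  by move=> i'; apply: sumr_ge0 => j' _; exact: nr_ge0.
- move=> k'; rewrite /=.
  have -> : P * M ^+ k'.+1 = z *: (P * M ^+ k') + P * (M - z%:M) * M ^+ k'.
    rewrite mulrBr mulrBl -scalemx1 -[1%:M]/(1 : 'M_m.+1) mulr_algr scalerAl exprS mulrA.
    by rewrite addrC subrK.
  by rewrite !mxE.
- move=> k'; apply: le_trans (hb k' i j) _; apply: ler_wpM2l => //.
  by apply: lerXn2r => //; rewrite nnegrE; lra.
Qed.

Lemma map_mxXn m (M : 'M[R]_m.+1) k :
  map_mx (real_complex R) (M ^+ k) = (map_mx (real_complex R) M) ^+ k.
Proof.
elim: k => [|k IH]; first by rewrite !expr0 map_mx1.
by rewrite !exprS map_mxM IH.
Qed.

Lemma decay_real m (M : 'M[R]_m) :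
  (forall z : C, eigenvalue (map_mx (real_complex R) M) z -> nr z < 1) ->
  exists rho c : R, [/\ 0 < rho, rho < 1 &
    forall k i j, `|(M ^+ k) i j| <= c * rho ^+ k].
Proof.
case: m M => [|m] M hM.
  by exists (1/2), 0; split; try lra; move=> k [].
set MC := map_mx (real_complex R) M in hM.
have [rs Hrs] := closed_field_poly_normal (char_poly MC).
rewrite (monicP (char_poly_monic MC)) scale1r in Hrs.
have hprod : 1 * \prod_(z <- rs) (MC - z%:M) = 0.
  rewrite mul1r -(Cayley_Hamilton MC) Hrs rmorph_prod; apply: eq_bigr => z _.
  by rewrite rmorphB /= horner_mx_X horner_mx_C.
have hs : forall z, z \in rs -> nr z < 1.
  by move=> z hz; apply: hM; rewrite eigenvalue_root_char Hrs root_prod_XsubC.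
have [rho [c [h1 h2 h3]]] := @decay_list _ _ _ hs _ hprod.
exists rho, c; split => // k i j; have := h3 k i j.
by rewrite mul1r -map_mxXn mxE nrR.
Qed.

End Spec.
Arguments nr {R}.
Arguments decay_real {R m M}.

Section PartA.
Variable R : fieldType.
Set Implicit Arguments.

Lemma sum_pick N (F : 'I_N -> R) (b : nat) (hb : (b < N)%N) :
  \sum_(l < N) F l * (val l == b)%:R = F (Ordinal hb).
Proof.
rewrite (bigD1 (Ordinal hb)) //= eqxx mulr1 big1 ?addr0 // => i hi.
have -> : (val i == b) = false.
  by apply/negbTE; apply: contra hi => /eqP h; apply/eqP/val_inj.
by rewrite mulr0.
Qed.

Variables (n : nat) (D1 S1 : {set 'I_n}).
Local Notation N := (n + n)%N.
Local Notation S := (Sset S1).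
Local Notation D := (Dset D1).

Lemma Tseq_size : size (Tseq D1 S1) = N.
Proof.
rewrite /Tseq !size_cat -!cardE.
have h1 := cardsID D S; have h2 := cardsID D (~: S); rewrite !setDE in h1 h2.
have h3 := cardsC S; rewrite card_ord in h3.
by rewrite addnA h1 h2 h3.
Qed.

Lemma Tseq_mem (i : 'I_N) : i \in Tseq D1 S1.
Proof.
rewrite /Tseq !mem_cat !mem_enum !in_setI !in_setC.
by case: (i \in S); case: (i \in D).
Qed.

Lemma Tseq_uniq : uniq (Tseq D1 S1).
Proof.
apply: (@leq_size_uniq _ (enum 'I_N)); first exact: enum_uniq.
  by move=> i _; exact: Tseq_mem.
by rewrite Tseq_size size_enum_ord.
Qed.

Lemma TtT : (Tmx R D1 S1)^T *m Tmx R D1 S1 = 1%:M.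
Proof.
apply/matrixP => j k; rewrite !mxE.
under eq_bigr do rewrite !mxE.
have hs : size (map val (Tseq D1 S1)) = N by rewrite size_map Tseq_size.
have hj : (nth 0%N (map val (Tseq D1 S1)) j < N)%N.
  by rewrite (nth_map j) ?Tseq_size // ltn_ord.
under eq_bigr do rewrite mulrC.
rewrite sum_pick /=.
have hu : uniq (map val (Tseq D1 S1)) by rewrite (map_inj_uniq val_inj) Tseq_uniq.
by rewrite (nth_uniq _ _ _ hu) ?hs.
Qed.


Hypothesis hSD : S \subset D.

Lemma TG : Tmx R D1 S1 *m Gmx R S1 = Gamma R S.
Proof.
apply/matrixP => i j; rewrite !mxE.
under eq_bigr do rewrite !mxE.
have hb : (val j < N)%N.
  by apply: leq_trans (ltn_ord j) _; rewrite -[X in (_ <= X)%N](card_ord N) max_card.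
rewrite sum_pick /=.
have hTs : (j < size (Tseq D1 S1))%N by rewrite Tseq_size.
rewrite (nth_map i) // /Tseq (setIidPl hSD) nth_cat -cardE ltn_ord -enum_val_nth.
by [].
Qed.

Lemma GtG : (Gamma R S)^T *m Gamma R S = 1%:M.
Proof.
apply/matrixP => j k; rewrite !mxE.
under eq_bigr do rewrite !mxE.
rewrite (eq_bigr (fun i => (i == enum_val j)%:R * (val i == val (enum_val k))%:R)) //.
rewrite (@sum_pick _ _ _ (ltn_ord (enum_val k))).
have -> : Ordinal (ltn_ord (enum_val k)) = enum_val k by apply: val_inj.
by rewrite (inj_eq enum_val_inj) eq_sym.
Qed.

Lemma invT : invmx (Tmx R D1 S1) = (Tmx R D1 S1)^T.
Proof.
have [_ hu] := mulmx1_unit TtT.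
by rewrite -[RHS]mulmx1 -(mulmxV hu) mulmxA TtT mul1mx.
Qed.

Lemma Bbar_eq p (B : 'M[R]_(N, p)) : (Gmx R S1)^T *m invmx (Tmx R D1 S1) *m B = Cmx R S1 *m B.
Proof. by rewrite invT -trmx_mul TG. Qed.

Lemma Cbar_eq : Cbar R D1 S1 = 1%:M.
Proof. by rewrite /Cbar -mulmxA TG GtG. Qed.

End PartA.

Section PartC.
Variable R : realFieldType.
Set Implicit Arguments.

Lemma bnd_mul p q s (X : 'M[R]_(p,q)) (Y : 'M[R]_(q,s)) a b :
  (forall i j, `|X i j| <= a) -> (forall i j, `|Y i j| <= b) ->
  forall i j, `|(X *m Y) i j| <= q%:R * (a * b).
Proof.
move=> hX hY i j; rewrite mxE; apply: le_trans (ler_norm_sum _ _ _) _.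
apply: (@le_trans _ _ (\sum_(l < q) (a * b))).
  by apply: ler_sum => l _; rewrite normrM; apply: ler_pM.
by rewrite sumr_const card_ord mulr_natl.
Qed.

Arguments bnd_mul [p q s X Y a b].

Lemma geo (rho : R) k : 0 <= rho -> rho < 1 -> \sum_(t < k) rho ^+ t <= (1 - rho)^-1.
Proof.
move=> r0 r1.
have e : (\sum_(t < k) rho ^+ t) * (1 - rho) = 1 - rho ^+ k.
  elim: k => [|k IH]; first by rewrite big_ord0 expr0 mul0r subrr.
  by rewrite big_ord_recr /= mulrDl IH exprS; ring.
have rk : 0 <= rho ^+ k by rewrite exprn_ge0.
have h : 0 < 1 - rho by rewrite subr_gt0.
rewrite -(ler_pM2r h) e mulVf ?gt_eqF //; lra.
Qed.

Lemma le_sum_ord' m (F : 'I_m -> R) i : (forall j, 0 <= F j) -> F i <= \sum_j F j.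
Proof. by move=> F0; rewrite (bigD1 i) //= lerDl sumr_ge0. Qed.

Lemma entry_bnd p q (X : 'M[R]_(p,q)) :
  forall i j, `|X i j| <= \sum_i \sum_j `|X i j|.
Proof.
move=> i j; apply: (@le_trans _ _ (\sum_j `|X i j|)).
  by apply: (@le_sum_ord' _ (fun j => `|X i j|)).
apply: (@le_sum_ord' _ (fun i => \sum_j `|X i j|)) => i'.
by apply: sumr_ge0.
Qed.

Lemma traj_bound m s (A : 'M[R]_(m, s)) (Cm : 'M[R]_(s, m)) (M : 'M[R]_s)
  (rho c : R) : 0 <= rho -> rho < 1 -> 0 <= c ->
  (forall k i j, `|(M ^+ k) i j| <= c * rho ^+ k) ->
  Cm *m (1%:M - A *m Cm) = M *m Cm ->
  exists K : R, 0 <= K /\ forall e, trajectory (1%:M - A *m Cm) e ->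
    forall k i, `|e k i 0| <= K * \sum_l `|e 0%N l 0|.
Proof.
move=> r0 r1 c0 hM hC.
set ac := \sum_i \sum_j `|A i j|.
set cc := \sum_i \sum_j `|Cm i j|.
have ac0 : 0 <= ac by apply: sumr_ge0 => i _; apply: sumr_ge0.
have cc0 : 0 <= cc by apply: sumr_ge0 => i _; apply: sumr_ge0.
set kap := s%:R * (ac * (s%:R * (c * (m%:R * cc)))).
have kap0 : 0 <= kap by rewrite /kap !mulr_ge0.
have h1 : 0 < 1 - rho by rewrite subr_gt0.
exists (1 + kap * (1 - rho)^-1); split.
  by rewrite addr_ge0 // mulr_ge0 // invr_ge0 ltW.
move=> e he.
set N0 := \sum_l `|e 0%N l 0|.
have N00 : 0 <= N0 by apply: sumr_ge0.
have he0 : forall i j, `|e 0%N i j| <= N0.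
  move=> i j; rewrite (ord1 j).
  by apply: (@le_sum_ord' _ (fun l => `|e 0%N l 0|)).
have eb : forall k, Cm *m e k = M ^+ k *m (Cm *m e 0%N).
  elim=> [|k IH]; first by rewrite expr0 mul1mx.
  by rewrite he (mulmxA Cm) hC -mulmxA IH mulmxA exprS.
have ek : forall k, e k = e 0%N - \sum_(t < k) A *m (M ^+ t *m (Cm *m e 0%N)).
  elim=> [|k IH]; first by rewrite big_ord0 subr0.
  rewrite he mulmxBl mul1mx -mulmxA (eb k) big_ord_recr /= {1}IH.
  by rewrite opprD addrA.
move=> k i; rewrite ek !mxE summxE.
apply: le_trans (ler_normB _ _) _.
have ht : forall t : 'I_k, `|(A *m (M ^+ t *m (Cm *m e 0%N))) i 0| <= kap * N0 * rho ^+ t.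
  move=> t.
  have hb1 := bnd_mul (entry_bnd Cm) he0.
  have hb2 := bnd_mul (hM t) hb1.
  have := bnd_mul (entry_bnd A) hb2 i 0.
  by move/le_trans; apply; rewrite /kap /ac /cc; rewrite le_eqVlt; apply/orP; left; apply/eqP; ring.
have hs : `|\sum_(t < k) (A *m (M ^+ t *m (Cm *m e 0%N))) i 0| <= \sum_(t < k) kap * N0 * rho ^+ t.
  apply: le_trans (ler_norm_sum _ _ _) _; apply: ler_sum => t _; exact: ht.
apply: le_trans (lerD (he0 i 0) hs) _.
rewrite -mulr_sumr.
have := @geo rho k r0 r1.
set G := \sum_(t < k) rho ^+ t => hG.
have : kap * N0 * G <= kap * N0 * (1 - rho)^-1 by apply: ler_wpM2l => //; rewrite mulr_ge0.
lra.
Qed.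

End PartC.
Arguments bnd_mul {R p q s X Y a b}.


Lemma Cmx_entry (R : fieldType) n (S1 : {set 'I_n}) (v : 'cV[R]_(n + n)) p
  (hp : p \in Sset S1) : (Cmx R S1 *m v) (enum_rank_in hp p) 0 = v p 0.
Proof.
rewrite mxE; under eq_bigr do rewrite !mxE.
rewrite (enum_rankK_in hp hp) (bigD1 p) //= eqxx mul1r big1 ?addr0 //.
by move=> i /negbTE ->; rewrite mul0r.
Qed.

Theorem theorem2 (R : rcfType) (n : nat) (par : 'I_n -> option 'I_n)
  (r x : 'I_n -> R) (D1 S1 : {set 'I_n})
  (F : 'M[R]_(#|D1| + #|D1|, #|Sset S1|)) :
  (0 < n)%N -> is_tree par -> D1 != set0 -> S1 != set0 ->
  Sset S1 \subset Dset D1 ->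
  let H := Bmx par r x D1 *m F *m Cmx R S1 in
  let Fbar := F *m Cbar R D1 S1 in
  let Hbar := Bbar par r x D1 S1 *m Fbar in
  (forall lam : R[i],
     eigenvalue (map_mx (fun a : R => (a%:C)%C) Hbar) lam -> `|lam - 1| < 1) ->
  (forall eb, trajectory (1%:M - Hbar) eb -> exp_conv_vec eb)
  /\ lyapunov_stable (1%:M - H)
  /\ (forall e, trajectory (1%:M - H) e ->
        forall p, p \in Sset S1 -> exp_conv (fun k => e k p 0)).
Proof.
move=> n0 tree D0 S0 hSD H Fbar Hbar hev.
set M := 1%:M - Hbar.
have HbarE : Hbar = Cmx R S1 *m Bmx par r x D1 *m F.
  by rewrite /Hbar /Fbar Cbar_eq // mulmx1 /Bbar Bbar_eq // mulmxA.
have hC : Cmx R S1 *m (1%:M - H) = M *m Cmx R S1.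
  by rewrite /M /H HbarE mulmxBr mulmx1 mulmxBl mul1mx !mulmxA.
have hevM : forall z : R[i], eigenvalue (map_mx (real_complex R) M) z -> nr z < 1.
  move=> z /eigenvalueP [v hv vn0].
  have : eigenvalue (map_mx (real_complex R) Hbar) (1 - z).
    apply/eigenvalueP; exists v => //.
    move: hv; rewrite /M map_mxB map_mx1 mulmxBr mulmx1 => hv.
    by rewrite scalerBl scale1r -hv opprB addrC subrK.
  move/hev; rewrite addrAC subrr add0r normrN normE.
  by rewrite -(rmorph1 (real_complex R)) ltcR.
have [rho [c [r0 r1 hMk]]] := decay_real hevM.
set c' := Num.max c 0.
have c'0 : 0 <= c' by rewrite le_max lexx orbT.
have r0' : 0 <= rho by rewrite ltW.
have hMk' : forall k i j, `|(M ^+ k) i j| <= c' * rho ^+ k.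
  move=> k i j; apply: le_trans (hMk k i j) _; apply: ler_wpM2r.
    by rewrite exprn_ge0.
  by rewrite le_max lexx.
have part1 : forall eb, trajectory M eb -> exp_conv_vec eb.
  move=> eb heb i.
  have ebk : forall k, eb k = M ^+ k *m eb 0%N.
    elim=> [|k IH]; first by rewrite expr0 mul1mx.
    by rewrite heb IH mulmxA exprS.
  set N0 := \sum_l `|eb 0%N l 0|.
  have he0 : forall l j, `|eb 0%N l j| <= N0.
    move=> l j; rewrite (ord1 j).
    by apply: (@le_sum_ord' _ _ (fun l => `|eb 0%N l 0|)).
  exists (#|Sset S1|%:R * (c' * N0)), rho; split.
    by rewrite r0' r1.
  move=> k; rewrite ebk.
  have := bnd_mul (hMk' k) he0 i 0.
  move/le_trans; apply; rewrite le_eqVlt; apply/orP; left; apply/eqP; ring.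
have [K [K0 hK]] := traj_bound rho c' r0' r1 c'0 hMk' hC.
split; first exact: part1.
split.
  split.
    move=> eps heps.
    have hd : 0 < K * (n + n)%:R + 1 by rewrite ltr_wpDl // mulr_ge0.
    exists (eps / (K * (n + n)%:R + 1)); first by rewrite divr_gt0.
    move=> z hz hz0 k i.
    set d := eps / (K * (n + n)%:R + 1).
    have ed : d * (K * (n + n)%:R + 1) = eps by rewrite /d mulfVK // gt_eqF.
    have hN : \sum_l `|z 0%N l 0| <= (n + n)%:R * d.
      apply: le_trans (_ : _ <= \sum_(l < n + n) d) _.
        by apply: ler_sum => l _; apply: ltW.
      by rewrite sumr_const card_ord mulr_natl.
    have d0 : 0 < d by rewrite divr_gt0.
    have := hK z hz k i.
    have : K * \sum_l `|z 0%N l 0| <= K * ((n + n)%:R * d) by apply: ler_wpM2l.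
    nra.
  move=> z hz; exists (K * \sum_l `|z 0%N l 0|) => k i; exact: hK.
move=> e he p hp.
have heb : trajectory M (fun k => Cmx R S1 *m e k).
  by move=> k; rewrite /= he mulmxA hC -mulmxA.
have [c1 [rho1 [hr hb]]] := part1 _ heb (enum_rank_in hp p).
exists c1, rho1; split => // k; have := hb k.
by rewrite /= Cmx_entry.
Qed.
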